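(* In the truncated Gale–Shapley algorithm described in the context, with a weight function $w$ respecting the preferences, for every $i\ge 2$ we have $w(L_i)\le(\Delta-1)\,w_i(B)$.
   Context: Instance: a simple bipartite graph $\mathcal{G}=(R\cup B,E)$ (red nodes $R$, blue nodes $B$) without isolated nodes and with maximum degree $\Delta$, each node having a linear preference order on its neighbours. Algorithm (distributed Gale–Shapley): each blue $b$ keeps $p(b)$ (current partner or $\bot$), initially $\bot$. Each red $r$ keeps a list $C(r)$, initially all neighbours in decreasing preference; $c(r)$ (candidate awaiting response, or $\bot$), initially $\bot$; $p(r)$ (partner or $\bot$), initially $\bot$. Each round consists of a blue turn then a red turn. Blue turn, for each $b$: let $P$ be the set of neighbours that sent `propose'; if $P=\emptyset$ do nothing. Otherwise let $Q=P\cup\{p(b)\}$ if $p(b)\ne\bot$, else $Q=P$; let $q$ be $b$'s most preferred node in $Q$; if $q\ne p(b)$, send `break' to $p(b)$ (if $p(b)\ne\bot$), send `accept' to $q$, and set $p(b)\gets q$; send `reject' to every $r\in P\setminus\{q\}$. Red turn, for each $r$: (1) if $c(r)\neq\bot$, receive the message from $c(r)$; if `accept' set $p(r)\gets c(r)$; if `reject' remove $c(r)$ from $C(r)$; then set $c(r)\gets\bot$. (2) If $p(r)\ne\bot$ and $p(r)$ sent `break', remove $p(r)$ from $C(r)$ and set $p(r)\gets\bot$. (3) If $p(r)=\bot$ and $C(r)$ is nonempty, set $c(r)$ to the first element of $C(r)$ and send `propose' to it. Notation: a subscript $i$ denotes the value at the end of round $i$. An edge $\{r,b\}$ is lost when $r$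 removes $b$ from $C(r)$; $L_i\subseteq E$ is the set of edges lost by the end of round $i$. Let $w:E\to\mathbb{Z}_{>0}$ be a weight function respecting preferences: whenever a node $v$ prefers $x$ over $y$, $w(\{v,x\})\ge w(\{v,y\})$; $w(F)=\sum_{e\in F}w(e)$. For $b\in B$, $w_i(b)=w(\{b,p_i(b)\})$ if $p_i(b)\ne\bot$ and $w_i(b)=0$ otherwise; $w_i(B)=\sum_{b\in B}w_i(b)$. *)

(* Defs.v *)
From mathcomp Require Import all_boot.

Set Implicit Arguments.
Unset Strict Implicit.
Unset Printing Implicit Defensive.

Section GS.
Variables (R B : finType).
Variable adj : R -> B -> bool.
(* preferences: rankR r b smaller = r prefers b more; idem for rankB b r.
   (Linearity = injectivity on neighbours, assumed in the theorem.) *)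
Variable rankR : R -> B -> nat.
Variable rankB : B -> R -> nat.

Definition prefR (r : R) (x y : B) := rankR r x < rankR r y.
Definition prefB (b : B) (x y : R) := rankB b x < rankB b y.

Record state := State {
  pB   : B -> option R;
  Cl   : R -> seq B;
  cand : R -> option B;
  pR   : R -> option B
}.

Definition init : state :=
  State (fun _ => None)
        (fun r => sort (fun x y => rankR r x <= rankR r y)
                       (enum [pred b | adj r b]))
        (fun _ => None) (fun _ => None).

(* r sent 'propose' to b in the previous red turn iff c(r) = b *)
Definition proposers (s : state) (b : B) : {set R} :=
  [set r | cand s r == Some b].

Definition Qset (s : state) (b : B) : {set R} :=
  match pB s b with
  | Some p => p |: proposers s b
  | None => proposers s b
  end.

Definition choice (s : state) (b : B) : option R :=
  match [pick r in proposers s b] with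
  | None => None
  | Some r0 => Some (fintype.arg_min r0 (mem (Qset s b)) (rankB b))
  end.

Definition newpB (s : state) (b : B) : option R :=
  match choice s b with Some q => Some q | None => pB s b end.

(* messages sent by b to r during the blue turn *)
Definition brk (s : state) (b : B) (r : R) : bool :=
  match choice s b with
  | Some q => (Some q != pB s b) && (pB s b == Some r)
  | None => false
  end.
Definition acc (s : state) (b : B) (r : R) : bool :=
  match choice s b with
  | Some q => (Some q != pB s b) && (q == r)
  | None => false
  end.
Definition rej (s : state) (b : B) (r : R) : bool :=
  match choice s b with
  | Some q => (r \in proposers s b) && (r != q)
  | None => false
  end.

(* ---- red turn for r (s = state before the round, messages from s) ---- *)
Definition red_step1 (s : state) (r : R) : seq B * option B :=
  match cand s r with
  | Some b => (if rej s b r then rem b (Cl s r) else Cl s r,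
               if acc s b r then Some b else pR s r)
  | None => (Cl s r, pR s r)
  end.

Definition red_step2 (s : state) (r : R) : seq B * option B :=
  let: (C1, p1) := red_step1 s r in
  match p1 with
  | Some b' => if brk s b' r then (rem b' C1, None) else (C1, p1)
  | None => (C1, p1)
  end.

Definition red_step3 (s : state) (r : R) : option B :=
  let: (C2, p2) := red_step2 s r in
  match p2 with
  | None => match C2 with b :: _ => Some b | [::] => None end
  | Some _ => None
  end.

(* one round = blue turn followed by red turn *)
Definition round (s : state) : state :=
  State (newpB s)
        (fun r => (red_step2 s r).1)
        (red_step3 s)
        (fun r => (red_step2 s r).2).

Definition st (i : nat) : state := iter i round init.

(* L_i: edges {r,b} lost (b removed from C(r)) by the end of round i.
   Since C(r) starts as the full neighbourhood and only shrinks, these are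
   the edges {r,b} with b no longer in C_i(r). *)
Definition lost (i : nat) : {set R * B} :=
  [set e | adj e.1 e.2 && (e.2 \notin Cl (st i) e.1)].

Definition maxdeg : nat :=
  maxn (\max_(r : R) #|[set b | adj r b]|) (\max_(b : B) #|[set r | adj r b]|).

End GS.

Definition wset (R B : finType) (w : R -> B -> nat) (F : {set R * B}) : nat :=
  \sum_(e in F) w e.1 e.2.

Definition wB (R B : finType) (w : R -> B -> nat) (s : state R B) : nat :=
  \sum_(b : B) match pB s b with Some r => w r b | None => 0 end.

(* Main.v *)
Require Import Defs.
From mathcomp Require Import all_boot.
Set Implicit Arguments.
Unset Strict Implicit.
Unset Printing Implicit Defensive.

Section P.
Variables (R B : finType) (adj : R -> B -> bool)
    (rankR : R -> B -> nat) (rankB : B -> R -> nat) (w : R -> B -> nat).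
Hypothesis linB : forall b x y, adj x b -> adj y b -> rankB b x = rankB b y -> x = y.
Hypothesis wresB : forall b x y, adj x b -> adj y b -> prefB rankB b x y ->
               w y b <= w x b.

Lemma wle b x y : adj x b -> adj y b -> rankB b x <= rankB b y -> w y b <= w x b.
Proof.
move=> ax ay; rewrite leq_eqVlt => /orP [/eqP e|lt].
  by rewrite (linB ax ay e).
exact: wresB.
Qed.

Lemma Qset_mem (s : state R B) b r :
  (r \in Qset s b) = (pB s b == Some r) || (cand s r == Some b).
Proof.
rewrite /Qset /proposers; case: (pB s b) => [p|] /=; rewrite ?inE //.
by rewrite eq_sym.
Qed.

Lemma choice_spec (s : state R B) b q : choice rankB s b = Some q ->
  q \in Qset s b /\ forall r, r \in Qset s b -> rankB b q <= rankB b r.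
Proof.
rewrite /choice; case: pickP => [r0 Hr0|//] [<-].
have H0 : r0 \in Qset s b.
  by rewrite Qset_mem; move: Hr0; rewrite inE => ->; rewrite orbT.
by case: (arg_minnP (rankB b) H0) => q' Hq Hmin; split.
Qed.

Lemma choice_some (s : state R B) b r : cand s r = Some b -> exists q, choice rankB s b = Some q.
Proof.
move=> h; rewrite /choice; case: pickP => [r0 _|]; first by eexists.
by move=> /(_ r); rewrite inE h eqxx.
Qed.

Definition Inv (s : state R B) :=
  [/\ (forall b r, pB s b = Some r -> adj r b /\ b \in Cl s r),
      (forall r b, b \in Cl s r -> adj r b),
      (forall r b, cand s r = Some b -> b \in Cl s r) &
      (forall r b, adj r b -> b \notin Cl s r ->
          exists2 q, pB s b = Some q & w r b <= w q b)].

Lemma keep (s : state R B) r b : b \in Cl s r ->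
  ~~ ((cand s r == Some b) && rej rankB s b r) -> ~~ brk rankB s b r ->
  b \in (red_step2 rankB s r).1.
Proof.
move=> hb hr hk; rewrite /red_step2 /red_step1.
case Hc: (cand s r) => [b''|] /=.
  have hb1 : b \in (if rej rankB s b'' r then rem b'' (Cl s r) else Cl s r).
    case: ifP => Hr //; apply: rem_mem => //.
    by apply/eqP => e; move: hr; rewrite Hc e eqxx Hr.
  case: (if acc rankB s b'' r then Some b'' else pR s r) => [b'|] //=.
  case: ifP => Hb //=; apply: rem_mem => //.
  by apply/eqP => e; move: hk; rewrite e Hb.
case: (pR s r) => [b'|] //=; case: ifP => Hb //=; apply: rem_mem => //.
by apply/eqP => e; move: hk; rewrite e Hb.
Qed.

Lemma removed (s : state R B) r b : b \in Cl s r ->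
  b \notin (red_step2 rankB s r).1 ->
  ((cand s r == Some b) && rej rankB s b r) || brk rankB s b r.
Proof.
move=> hb; apply: contraR; rewrite negb_or => /andP [h1 h2].
exact: keep.
Qed.

Lemma sub2 (s : state R B) r b : b \in (red_step2 rankB s r).1 -> b \in Cl s r.
Proof.
rewrite /red_step2 /red_step1.
have sr : forall (x : B) l, b \in rem x l -> b \in l by move=> x l /mem_rem.
case: (cand s r) => [b''|] /=.
  set C1 := (if rej rankB s b'' r then rem b'' (Cl s r) else Cl s r).
  have hC : b \in C1 -> b \in Cl s r by rewrite /C1; case: ifP => // _ /sr.
  case: (if acc rankB s b'' r then Some b'' else pR s r) => [b'|] //=.
  by case: ifP => _ //= /sr /hC.
by case: (pR s r) => [b'|] //=; case: ifP => _ //= /sr.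
Qed.

Lemma step3 (s : state R B) r b : red_step3 rankB s r = Some b ->
  b \in (red_step2 rankB s r).1.
Proof.
rewrite /red_step3; case: (red_step2 rankB s r) => C2 p2 /=.
case: p2 => //; case: C2 => //= x l [->]; exact: mem_head.
Qed.

Lemma adjQ (s : state R B) b r : Inv s -> r \in Qset s b -> adj r b.
Proof.
case=> Ia Ic Id _; rewrite Qset_mem => /orP [/eqP /Ia [] //|/eqP /Id].
exact: Ic.
Qed.

Lemma choice_best (s : state R B) b q r : Inv s -> choice rankB s b = Some q ->
  r \in Qset s b -> w r b <= w q b.
Proof.
move=> I /choice_spec [hq hmin] hr.
by apply: wle; [exact: adjQ hq|exact: adjQ hr|exact: hmin].
Qed.

Lemma newpB_ge (s : state R B) b q0 : Inv s -> pB s b = Some q0 ->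
  exists2 q', newpB rankB s b = Some q' & w q0 b <= w q' b.
Proof.
move=> I hp; rewrite /newpB; case Hc: (choice rankB s b) => [q|].
  exists q => //; apply: (choice_best I Hc).
  by rewrite Qset_mem hp eqxx.
by exists q0.
Qed.

Lemma Inv_round (s : state R B) : Inv s -> Inv (round rankB s).
Proof.
move=> I; have [Ia Ic Id Ib] := I; split => /=.
- move=> b q hq; change (newpB rankB s b = Some q) in hq.
  have [rejF brkF] : rej rankB s b q = false /\ brk rankB s b q = false.
    move: hq; rewrite /newpB /rej /brk.
    case: (choice rankB s b) => [q'|] /= => [[<-]|_] //.
    split; first by rewrite eqxx andbF.
    case: eqP => [<-|] //= ne.
    by apply/eqP => e; apply: ne; rewrite e.
  have hin : b \in Cl s q.
    move: hq; rewrite /newpB; case Hc: (choice rankB s b) => [q'|] [e].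
      have [hq' _] := choice_spec Hc; move: hq'; rewrite Qset_mem e.
      by case/orP => [/eqP /Ia []|/eqP /Id].
    by have [] := Ia _ _ e.
  split; first exact: Ic hin.
  apply: keep => //; first by rewrite rejF andbF.
  by rewrite brkF.
- by move=> r b /sub2 /Ic.
- by move=> r b /step3.
move=> r b hadj hn.
case hin: (b \in Cl s r).
  case/orP: (removed hin hn) => [/andP [/eqP hc]|].
    rewrite /rej /newpB; case Hc: (choice rankB s b) => [q|] // /andP [hp _].
    exists q => //; apply: (choice_best I Hc).
    by rewrite Qset_mem; move: hp; rewrite inE => ->; rewrite orbT.
  rewrite /brk /newpB; case Hc: (choice rankB s b) => [q|] // /andP [_ hp].
  exists q => //; apply: (choice_best I Hc).
  by rewrite Qset_mem hp.
have [q0 hq0 hw] := Ib r b hadj (negbT hin).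
have [q' hq' hw'] := newpB_ge I hq0.
by exists q' => //; apply: leq_trans hw'.
Qed.

Lemma Inv_init : Inv (init adj rankR).
Proof.
split => //= r b.
  by rewrite mem_sort mem_enum.
by move=> h; rewrite mem_sort mem_enum inE h.
Qed.

Lemma Inv_st i : Inv (st adj rankR rankB i).
Proof.
elim: i => [|i IH]; first exact: Inv_init.
rewrite /st iterS; exact: Inv_round.
Qed.
End P.

Unset Implicit Arguments.
Theorem lemma5 (R B : finType) (adj : R -> B -> bool)
    (rankR : R -> B -> nat) (rankB : B -> R -> nat) (w : R -> B -> nat)
    (* no isolated nodes *)
    (noisoR : forall r : R, exists b : B, adj r b)
    (noisoB : forall b : B, exists r : R, adj r b)
    (* each node has a linear preference order on its neighbours *)
    (linR : forall r x y, adj r x -> adj r y -> rankR r x = rankR r y -> x = y)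
    (linB : forall b x y, adj x b -> adj y b -> rankB b x = rankB b y -> x = y)
    (* positive weights on edges *)
    (wpos : forall r b, adj r b -> 0 < w r b)
    (* w respects preferences *)
    (wresR : forall r x y, adj r x -> adj r y -> prefR rankR r x y ->
               w r y <= w r x)
    (wresB : forall b x y, adj x b -> adj y b -> prefB rankB b x y ->
               w y b <= w x b)
    (i : nat) (hi : 2 <= i) :
  wset w (lost adj rankR rankB i) <=
    (maxdeg adj - 1) * wB w (st adj rankR rankB i).
Proof.
have [Ia Ic Id Ib] := Inv_st rankR linB wresB i.
set s := st adj rankR rankB i.
set L := lost adj rankR rankB i.
pose W b := match pB s b with Some r => w r b | None => 0 end.
have step1 : wset w L <= \sum_(e in L) W e.2.
  apply: leq_sum => [[r b]]; rewrite inE /= => /andP [ha hn].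
  by have [q hq hw] := Ib r b ha hn; rewrite /W hq.
apply: (leq_trans step1).
have -> : \sum_(e in L) W e.2 = \sum_b #|[set r | (r, b) \in L]| * W b.
  rewrite big_mkcond /=.
  have -> : \sum_(e : R * B) (if e \in L then W e.2 else 0)
      = \sum_r \sum_b (if (r, b) \in L then W b else 0).
    by rewrite pair_big /=; apply: eq_bigr => [[r b]].
  rewrite exchange_big /=; apply: eq_bigr => b _.
  by rewrite -big_mkcond /= -sum_nat_const; apply: eq_bigl => r; rewrite inE.
rewrite /wB big_distrr /=; apply: leq_sum => b _.
rewrite /W; case hp: (pB s b) => [p|]; last by rewrite !muln0.
rewrite mulnC [X in _ <= X]mulnC; apply: leq_mul => //.
have [hpa hpc] := Ia b p hp.
pose A := [set r | adj r b].
have hsub : [set r | (r, b) \in L] \subset A :\ p.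
  apply/subsetP => r; rewrite !inE /= => /andP [ha hn]; rewrite ha andbT.
  by apply/eqP => e; move: hn; rewrite e hpc.
apply: leq_trans (subset_leq_card hsub) _.
have hA : #|A| <= maxdeg adj.
  rewrite /maxdeg; apply: leq_trans (leq_maxr _ _).
  rewrite /A; exact: (@leq_bigmax B (fun b0 => #|[set r | adj r b0]|) b).
rewrite (cardsD1 p A) inE hpa add1n in hA.
by rewrite leq_subRL // (leq_trans _ hA).
Qed.
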